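(* Let $k\ge 1$ and let $G$ be a complete $k$-partite graph in which every partite set has at least $2$ vertices. Then $\rho_T(G)=k$.
   Context: Graphs are finite and simple. A complete $k$-partite graph is one whose vertex set is partitioned into $k$ nonempty independent sets (partite sets) such that two vertices are adjacent iff they lie in different partite sets. For $u,v\in(\mathbb{R}\cup\{\infty\})^k$ the min-plus tropical dot product is $u\odot v=\min_i(u_i+v_i)$. A min-plus $k$-tropical dot product representation of $G=(V,E)$ is a map $f:V\to(\mathbb{R}\cup\{\infty\})^k$ with a threshold $t>0$ such that for all distinct $x,y\in V$: $xy\in E$ iff $f(x)\odot f(y)\ge t$. $\rho_T(G)$ is the least $k\ge 1$ for which such a representation exists. *)

(* Defs.v *)
From mathcomp Require Import all_boot.
From Stdlib Require Import Reals.

Set Implicit Arguments.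
Unset Strict Implicit.
Unset Printing Implicit Defensive.

(* Extended reals R ∪ {∞}: [Some r] is the real r, [None] is ∞. *)
Definition xreal := option R.

Definition xadd (a b : xreal) : xreal :=
  match a, b with
  | Some x, Some y => Some (x + y)%R
  | _, _ => None
  end.

Definition xmin (a b : xreal) : xreal :=
  match a, b with
  | None, _ => b
  | _, None => a
  | Some x, Some y => Some (Rmin x y)
  end.

Definition xge (a : xreal) (t : R) : Prop :=
  match a with
  | None => True
  | Some x => (t <= x)%R
  end.

Definition tdot (k : nat) (u v : 'I_k -> xreal) : xreal :=
  foldr (fun i acc => xmin (xadd (u i) (v i)) acc) None (enum 'I_k).

Definition tropical_rep (T : finType) (e : rel T) (k : nat) : Prop :=
  exists (f : T -> 'I_k -> xreal) (t : R),
    (0 < t)%R /\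
    forall x y : T, x <> y -> (e x y <-> xge (tdot (f x) (f y)) t).

Definition rhoT_eq (T : finType) (e : rel T) (k : nat) : Prop :=
  (1 <= k)%N /\ tropical_rep e k /\
  forall j : nat, (1 <= j)%N -> tropical_rep e j -> (k <= j)%N.

Definition complete_multipartite_big (T : finType) (e : rel T) (k : nat)
    (p : T -> 'I_k) : Prop :=
  (forall x y : T, x != y -> e x y = (p x != p y)) /\
  (forall x : T, e x x = false) /\
  (forall i : 'I_k, (2 <= #|[pred x | p x == i]|)%N).

(* Main.v *)
Require Import Defs.
From mathcomp Require Import all_boot.
From Stdlib Require Import Reals Lra Classical ClassicalEpsilon.

Lemma xge_min a b t : xge (xmin a b) t <-> xge a t /\ xge b t.
Proof.
case: a => [x|]; case: b => [y|] /=; try tauto.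
split.
- move=> H; split; [apply: Rle_trans H (Rmin_l _ _) | apply: Rle_trans H (Rmin_r _ _)].
- by case=> H1 H2; apply: Rmin_glb.
Qed.

Lemma xge_fold (k : nat) (u v : 'I_k -> xreal) t (s : seq 'I_k) :
  xge (foldr (fun i acc => xmin (xadd (u i) (v i)) acc) None s) t <->
  (forall i, i \in s -> xge (xadd (u i) (v i)) t).
Proof.
elim: s => [|a s IH] /=.
  by split => // _ i; rewrite in_nil.
rewrite xge_min IH; split.
- case=> H1 H2 i; rewrite in_cons => /orP [/eqP -> //|]; exact: H2.
- move=> H; split; first by apply: H; rewrite in_cons eqxx.
  by move=> i Hi; apply: H; rewrite in_cons Hi orbT.
Qed.

Lemma xge_tdot (k : nat) (u v : 'I_k -> xreal) t :
  xge (tdot u v) t <-> (forall i, xge (xadd (u i) (v i)) t).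
Proof.
rewrite /tdot xge_fold; split => H i; last by move=> _; apply: H.
by apply: H; rewrite mem_enum.
Qed.

Lemma nxge_add a b t : ~ xge (xadd a b) t ->
  exists x y, a = Some x /\ b = Some y /\ (x + y < t)%R.
Proof.
case: a => [x|]; case: b => [y|] //= H; exists x, y; do 2 split => //.
by apply: Rnot_le_lt.
Qed.

Theorem mainTheorem14 (k : nat) (T : finType) (e : rel T) (p : T -> 'I_k) :
  (1 <= k)%N -> complete_multipartite_big e p -> rhoT_eq e k.
Proof.
move=> hk [He [Hirr Hc]]; split => //; split.
- exists (fun x (j : 'I_k) => Some (if j == p x then 0%R else 1%R)), 1%R.
  split; first lra.
  move=> x y /eqP xy; rewrite He // xge_tdot /=; split.
  + move=> Hp i; case: eqP => [->|_]; case: eqP => [Ey|_]; try lra.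
    by rewrite Ey eqxx in Hp.
  + move=> H; apply/negP => /eqP Hp; move: (H (p x)); rewrite eqxx -Hp eqxx; lra.
- move=> j _ [f [t [ht Hf]]].
  have Hex : forall i : 'I_k, exists c : 'I_j, exists a b, p a = i /\ p b = i /\ a <> b /\
      exists xa xb, f a c = Some xa /\ f b c = Some xb /\ (xa + xb < t)%R.
    move=> i; have := Hc i; move/card_gt1P => [a [b [Ha Hb ab]]].
    move: Ha Hb; rewrite !inE => /eqP Ha /eqP Hb.
    have nab : a <> b by move/eqP; rewrite (negbTE ab).
    have ne : ~ e a b by rewrite He // Ha Hb eqxx.
    have : ~ xge (tdot (f a) (f b)) t by move=> H; apply: ne; apply/(Hf _ _ nab).
    rewrite xge_tdot => /not_all_ex_not [c /nxge_add [xa [xb [E1 [E2 E3]]]]].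
    exists c, a, b; do 3 split => //; by exists xa, xb.
  pose cf i := proj1_sig (constructive_indefinite_description _ (Hex i)).
  have cfP i := proj2_sig (constructive_indefinite_description _ (Hex i)).
  have inj : injective cf.
    move=> i i' Eq; apply/eqP; apply/negPn/negP => nii.
    move: (cfP i) (cfP i'); rewrite -/(cf i) -/(cf i') -Eq.
    move=> [a [b [Ha [Hb [_ [xa [xb [Ea [Eb Hab]]]]]]]]].
    move=> [a' [b' [Ha' [Hb' [_ [xa' [xb' [Ea' [Eb' Hab']]]]]]]]].
    have key : forall u w, p u = i -> p w = i' -> forall xu xw,
        f u (cf i) = Some xu -> f w (cf i) = Some xw -> (t <= xu + xw)%R.
      move=> u w Hu Hw xu xw Eu Ew.
      have uw : u <> w by move=> E; move: nii; rewrite -Hu -Hw E eqxx.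
      have : e u w by rewrite He; [rewrite Hu Hw | apply/eqP].
      move/(Hf _ _ uw); rewrite xge_tdot => /(_ (cf i)); by rewrite Eu Ew.
    have := key _ _ Ha Ha' _ _ Ea Ea'; have := key _ _ Hb Hb' _ _ Eb Eb'. lra.
  by have := @leq_card _ _ cf inj; rewrite !card_ord.
Qed.
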